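(* Let $(\Theta,\mathbf{Q},\leq)$ be a $\Theta$-projective system of size $t$ in a Hom-finite triangulated $R$-category $\mathcal{T}$. Then: (a) for every $M\in\mathfrak{F}(\Theta)$ and $i\in[1,t]$, the multiplicity $[M:\Theta(i)]_\xi$ does not depend on the chosen $\Theta$-filtration $\xi$ of $M$; in particular the minimal $\Theta$-filtration length satisfies $\ell_\Theta(M)=\sum_{i=1}^t[M:\Theta(i)]$; (b) $Q(i)\not\simeq Q(j)$ if $i\neq j$.
   Context: A Hom-finite triangulated $R$-category: $R$ a commutative ring, $\mathcal{T}$ triangulated with finitely generated $R$-module Hom-sets, $R$-bilinear composition and $R$-linear shift. A $\Theta$-filtration $\xi$ of $M$: distinguished triangles $M_{k-1}\to M_k\to X_k\to M_{k-1}[1]$ ($k=0,\dots,n$), $M_{-1}=0=X_0$, $M_n=M$, $X_k\in\{\Theta(1),\dots,\Theta(t)\}$ for $k\ge1$; $\mathfrak{F}(\mathcal{X})$ is the class of objects having such filtrations by objects of $\mathcal{X}$; $[M:\Theta(i)]_\xi$ is the number of $k\in[0,n]$ with $X_k\simeq\Theta(i)$; $\ell_\Theta(M)$ is the minimum of the lengths $n$ over all $\Theta$-filtrations. A $\Theta$-projective system of size $t$: $\le$ a linear order on $[1,t]$; $\Theta(i)$ non-zero with $\mathrm{Hom}(\Theta(j),\Theta(i))=0$ for $j>i$; $Q(i)$ indecomposable with $Q=\bigoplus Q(i)$ satisfying $\mathrm{Hom}(Q,\Theta(j)[\pm1])=0$ for all $j$; for each $i$ a distinguished triangle $K(i)\to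 Q(i)\to\Theta(i)\to K(i)[1]$ with $K(i)\in\mathfrak{F}(\{\Theta(j):j>i\})$, $\mathrm{Hom}(K(i)[1],\Theta(i))=0$. *)

(* Defs.v *)
From HB Require Import structures.
From mathcomp Require Import all_boot all_order all_algebra.
From Stdlib Require Import ClassicalEpsilon.
Set Implicit Arguments. Unset Strict Implicit. Unset Printing Implicit Defensive.
Import Order.TTheory GRing.Theory Num.Theory.
Local Open Scope ring_scope.

Record triData (R : comPzRingType) := TriData {
  Ob : Type;
  Hom : Ob -> Ob -> lmodType R;
  comp : forall X Y Z : Ob, Hom Y Z -> Hom X Y -> Hom X Z;
  idm : forall X : Ob, Hom X X;
  shift : Ob -> Ob;
  shiftH : forall X Y : Ob, Hom X Y -> Hom (shift X) (shift Y);
  Dist : forall X Y Z : Ob, Hom X Y -> Hom Y Z -> Hom Z (shift X) -> Prop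
}.
Arguments comp {R C X Y Z} : rename.
Arguments idm {R C} X : rename.
Arguments shift {R C} X : rename.
Arguments shiftH {R C X Y} : rename.
Arguments Dist {R C X Y Z} : rename.

Section Notions.
Variables (R : comPzRingType) (C : triData R).
Local Notation Ob := (Ob C).
Local Notation Hom := (@Hom R C).

Definition IsIso (X Y : Ob) (f : Hom X Y) : Prop :=
  exists g : Hom Y X, comp g f = idm X /\ comp f g = idm Y.

Definition Iso (X Y : Ob) : Prop := exists f : Hom X Y, IsIso f.

Definition IsZero (X : Ob) : Prop := idm X = 0.

Definition HomZero (X Y : Ob) : Prop := forall f : Hom X Y, f = 0.

Definition IsBiprod2 (A B S : Ob) : Prop :=
  exists (i1 : Hom A S) (i2 : Hom B S) (p1 : Hom S A) (p2 : Hom S B),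
    [/\ comp p1 i1 = idm A, comp p2 i2 = idm B, comp p1 i2 = 0, comp p2 i1 = 0
      & comp i1 p1 + comp i2 p2 = idm S].

Definition IsBiprod (n : nat) (F : 'I_n -> Ob) (S : Ob) : Prop :=
  exists (ins : forall k, Hom (F k) S) (prs : forall k, Hom S (F k)),
    (forall k, comp (prs k) (ins k) = idm (F k)) /\
    (forall k l, k != l -> comp (prs l) (ins k) = 0) /\
    \sum_(k < n) comp (ins k) (prs k) = idm S.

Definition Indecomposable (X : Ob) : Prop :=
  ~ IsZero X /\ forall A B : Ob, IsBiprod2 A B X -> IsZero A \/ IsZero B.

Definition HomFinite : Prop :=
  forall X Y : Ob, exists (n : nat) (v : 'I_n -> Hom X Y),
    forall x : Hom X Y, exists c : 'I_n -> R, x = \sum_(k < n) c k *: v k.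

Record triangulated : Prop := {
  comp_assoc : forall (W X Y Z : Ob) (h : Hom Y Z) (g : Hom X Y) (f : Hom W X),
      comp h (comp g f) = comp (comp h g) f;
  comp_id_l : forall (X Y : Ob) (f : Hom X Y), comp (idm Y) f = f;
  comp_id_r : forall (X Y : Ob) (f : Hom X Y), comp f (idm X) = f;
  comp_linear_l : forall (X Y Z : Ob) (a : R) (g g' : Hom Y Z) (f : Hom X Y),
      comp (a *: g + g') f = a *: comp g f + comp g' f;
  comp_linear_r : forall (X Y Z : Ob) (a : R) (g : Hom Y Z) (f f' : Hom X Y),
      comp g (a *: f + f') = a *: comp g f + comp g f';
  zero_exists : exists Z : Ob, IsZero Z;
  biprod_exists : forall A B : Ob, exists S : Ob, IsBiprod2 A B S;
  shift_comp : forall (X Y Z : Ob) (g : Hom Y Z) (f : Hom X Y),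
      shiftH (comp g f) = comp (shiftH g) (shiftH f);
  shift_id : forall X : Ob, shiftH (idm X) = idm (shift X);
  shift_linear : forall (X Y : Ob) (a : R) (f f' : Hom X Y),
      shiftH (a *: f + f') = a *: shiftH f + shiftH f';
  shift_full : forall (X Y : Ob) (g : Hom (shift X) (shift Y)),
      exists f : Hom X Y, shiftH f = g;
  shift_faithful : forall (X Y : Ob) (f f' : Hom X Y), shiftH f = shiftH f' -> f = f';
  shift_esurj : forall Y : Ob, exists X : Ob, Iso (shift X) Y;
  TR1_iso : forall (X Y Z X' Y' Z' : Ob)
      (f : Hom X Y) (g : Hom Y Z) (h : Hom Z (shift X))
      (f' : Hom X' Y') (g' : Hom Y' Z') (h' : Hom Z' (shift X'))
      (a : Hom X X') (b : Hom Y Y') (c : Hom Z Z'),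
      IsIso a -> IsIso b -> IsIso c ->
      comp b f = comp f' a -> comp c g = comp g' b ->
      comp (shiftH a) h = comp h' c ->
      Dist f g h -> Dist f' g' h';
  TR1_id : forall (X Z : Ob), IsZero Z -> Dist (idm X) (0 : Hom X Z) (0 : Hom Z (shift X));
  TR1_cone : forall (X Y : Ob) (f : Hom X Y),
      exists (Z : Ob) (g : Hom Y Z) (h : Hom Z (shift X)), Dist f g h;
  TR2 : forall (X Y Z : Ob) (f : Hom X Y) (g : Hom Y Z) (h : Hom Z (shift X)),
      Dist f g h <-> Dist g h (- shiftH f);
  TR3 : forall (X Y Z X' Y' Z' : Ob)
      (f : Hom X Y) (g : Hom Y Z) (h : Hom Z (shift X))
      (f' : Hom X' Y') (g' : Hom Y' Z') (h' : Hom Z' (shift X'))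
      (a : Hom X X') (b : Hom Y Y'),
      Dist f g h -> Dist f' g' h' -> comp b f = comp f' a ->
      exists c : Hom Z Z', comp c g = comp g' b /\ comp (shiftH a) h = comp h' c;
  TR4 : forall (X Y Z Z' X' Y' : Ob) (u : Hom X Y) (v : Hom Y Z)
      (j : Hom Y Z') (k : Hom Z' (shift X))
      (l : Hom Z X') (i : Hom X' (shift Y))
      (m : Hom Z Y') (n : Hom Y' (shift X)),
      Dist u j k -> Dist v l i -> Dist (comp v u) m n ->
      exists (f : Hom Z' Y') (g : Hom Y' X'),
        [/\ Dist f g (comp (shiftH j) i), comp f j = comp m v,
            comp n f = k, comp g m = l & comp i g = comp (shiftH u) n]
}.

(* Filtrations.  For a class P of objects, a P-filtration of M of length n   *)
(* consists of distinguished triangles M_{k-1} -> M_k -> X_k -> M_{k-1}[1]   *)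
(* (k = 0..n) with M_{-1} = 0 = X_0, M_n = M and X_k in P for k >= 1.        *)
(* Indexing: fM k stands for M_{k-1}, fX k for X_k.                          *)
Record filtration (P : Ob -> Prop) (M : Ob) := Filtration {
  flen : nat;
  fM : nat -> Ob;
  fX : nat -> Ob;
  ff : forall k, Hom (fM k) (fM k.+1);
  fg : forall k, Hom (fM k.+1) (fX k);
  fh : forall k, Hom (fX k) (shift (fM k));
  f_dist : forall k, (k <= flen)%N -> Dist (ff k) (fg k) (fh k);
  f_M0 : IsZero (fM 0);
  f_Mn : fM flen.+1 = M;
  f_X0 : IsZero (fX 0);
  f_Xin : forall k, (0 < k <= flen)%N -> P (fX k)
}.

Definition inF (P : Ob -> Prop) (M : Ob) : Prop := inhabited (filtration P M).

Definition classOf (t : nat) (Theta : 'I_t -> Ob) (Y : Ob) : Prop :=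
  exists i : 'I_t, Y = Theta i.

Definition pb (P : Prop) : bool :=
  if excluded_middle_informative P then true else false.

Definition mult (t : nat) (Theta : 'I_t -> Ob) (M : Ob)
    (xi : filtration (classOf Theta) M) (i : 'I_t) : nat :=
  \sum_(k < (flen xi).+1) pb (Iso (fX xi k) (Theta i)).

Definition IsMinFiltLength (t : nat) (Theta : 'I_t -> Ob) (M : Ob) (n : nat)
    : Prop :=
  (exists xi : filtration (classOf Theta) M, flen xi = n) /\
  (forall xi : filtration (classOf Theta) M, (n <= flen xi)%N).

Definition linear_order (t : nat) (le : rel 'I_t) : Prop :=
  [/\ reflexive le, antisymmetric le, transitive le & total le].

Record ThetaProjSystem (t : nat) (le : rel 'I_t) (Theta Q : 'I_t -> Ob) : Prop := {
  tps_order : linear_order le;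
  tps_nonzero : forall i, ~ IsZero (Theta i);
  tps_hom : forall i j, le i j -> j != i -> HomZero (Theta j) (Theta i);
  tps_indec : forall i, Indecomposable (Q i);
  (* Q = (+)_i Q(i) with Hom(Q, Theta(j)[1]) = 0 = Hom(Q, Theta(j)[-1]) *)
  tps_sum : exists Qs : Ob, IsBiprod Q Qs /\
      (forall j, HomZero Qs (shift (Theta j))) /\
      (forall j (Y : Ob), Iso (shift Y) (Theta j) -> HomZero Qs Y);
  tps_tri : forall i, exists (K : Ob) (a : Hom K (Q i)) (b : Hom (Q i) (Theta i))
      (c : Hom (Theta i) (shift K)),
      [/\ Dist a b c,
          inF (fun Y => exists j, le i j /\ j != i /\ Y = Theta j) K
        & HomZero (shift K) (Theta i)]
}.

End Notions.

(* Main.v *)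
Require Import Defs.
From HB Require Import structures.
From mathcomp Require Import all_boot all_order all_algebra.
From Stdlib Require Import ClassicalEpsilon.
Set Implicit Arguments. Unset Strict Implicit. Unset Printing Implicit Defensive.
Import Order.TTheory GRing.Theory Num.Theory.
Local Open Scope ring_scope.
Section Vasc.
Variable R : comPzRingType.
Variable N : lmodType R.

Definition lin (A B : lmodType R) (F : A -> B) :=
  forall (a : R) (x y : A), F (a *: x + y) = a *: F x + F y.

Lemma lin0 (A B : lmodType R) (F : A -> B) : lin F -> F 0 = 0.
Proof.
move=> H; have := H 1 0 0; rewrite !scale1r addr0 => E.
by have := subrr (F 0); rewrite {1}E addrK => ->.
Qed.
Lemma linD (A B : lmodType R) (F : A -> B) : lin F -> forall x y, F (x + y) = F x + F y.
Proof. by move=> H x y; have := H 1 x y; rewrite !scale1r. Qed.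
Lemma linZ (A B : lmodType R) (F : A -> B) : lin F -> forall a x, F (a *: x) = a *: F x.
Proof. by move=> H a x; have := H a x 0; rewrite !addr0 (lin0 H) addr0 => ->. Qed.
Lemma linN (A B : lmodType R) (F : A -> B) : lin F -> forall x, F (- x) = - F x.
Proof. by move=> H x; rewrite -scaleN1r linZ // scaleN1r. Qed.
Lemma lin_sum (A B : lmodType R) (F : A -> B) : lin F ->
  forall (I : Type) (r : seq I) (P : pred I) (G : I -> A),
  F (\sum_(i <- r | P i) G i) = \sum_(i <- r | P i) F (G i).
Proof.
move=> H I r P G; apply: (big_morph F (linD H) (lin0 H)).
Qed.

Variable G : N -> N.
Hypothesis linG : lin G.

Lemma iter_lin (i : nat) : lin (iter i G).
Proof.
elim: i => [|i IH] a x y /=; first by [].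
by rewrite IH linG.
Qed.

Section NZ.
Hypothesis h1 : (1 : R) != 0.
Definition R' : Type := R.
HB.instance Definition _ := GRing.ComPzRing.on R'.
HB.instance Definition _ := GRing.PzSemiRing_isNonZero.Build R' h1.

Definition act (p : {poly R'}) (x : N) : N :=
  \sum_(i < size p) (p`_i : R) *: iter i G x.

Lemma act_ext (p : {poly R'}) (m : nat) (x : N) : (size p <= m)%N ->
  act p x = \sum_(i < m) (p`_i : R) *: iter i G x.
Proof.
move=> H; rewrite /act (big_ord_widen m (fun i => (p`_i : R) *: iter i G x) H).
rewrite big_mkcond; apply: eq_bigr => i _; case: ifP => // /negbT.
by rewrite -leqNgt => Hi; rewrite nth_default // scale0r.
Qed.

Lemma act0 x : act 0 x = 0.
Proof. by rewrite /act size_poly0 big_ord0. Qed.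

Lemma actD p q x : act (p + q) x = act p x + act q x.
Proof.
set m := maxn (size p) (size q).
rewrite (act_ext (m := m)) ?(leq_trans (size_polyD _ _)) //.
rewrite (act_ext (p := p) (m := m)) ?leq_maxl //.
rewrite (act_ext (p := q) (m := m)) ?leq_maxr //.
by rewrite -big_split; apply: eq_bigr => i _; rewrite coefD scalerDl.
Qed.

Lemma actZ (c : R') p x : act (c *: p) x = (c : R) *: act p x.
Proof.
rewrite (act_ext (m := size p)) ?size_scale_leq // /act scaler_sumr.
by apply: eq_bigr => i _; rewrite coefZ scalerA.
Qed.

Lemma actC (c : R') x : act c%:P x = (c : R) *: x.
Proof.
rewrite (act_ext (m := 1)) ?size_polyC_leq1 // big_ord1 coefC /=.
done.
Qed.

Lemma actN p x : act (- p) x = - act p x.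
Proof.
by rewrite -(scaleN1r p) actZ scaleN1r.
Qed.

Lemma actXr p x : act (p * 'X) x = act p (G x).
Proof.
rewrite (act_ext (m := (size p).+1)); last first.
  by rewrite (leq_trans (size_polyMleq _ _)) // size_polyX addn2.
rewrite big_ord_recl coefMX /= scale0r add0r /act.
by apply: eq_bigr => i _; rewrite coefMX /= add0n -iterS iterSr.
Qed.

Lemma G_act p x : G (act p x) = act p (G x).
Proof.
rewrite /act (lin_sum linG); apply: eq_bigr => i _.
by rewrite (linZ linG) -iterS iterSr.
Qed.

Lemma actM p q x : act (p * q) x = act p (act q x).
Proof.
elim/poly_ind: p x => [|p c IH] x; first by rewrite mul0r !act0.
rewrite mulrDl mulrAC mul_polyC actD actXr actZ IH actD actXr actC.
by rewrite G_act.
Qed.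

Lemma act_lin p : lin (act p).
Proof.
move=> a x y; rewrite /act scaler_sumr -big_split; apply: eq_bigr => i _.
by rewrite (iter_lin i) scalerDr !scalerA mulrC.
Qed.

Lemma act_sump (I : Type) (r : seq I) (P : pred I) (F : I -> {poly R'}) x :
  act (\sum_(i <- r | P i) F i) x = \sum_(i <- r | P i) act (F i) x.
Proof. by apply: (big_morph (fun p => act p x)) => [p q|]; rewrite ?actD ?act0. Qed.

Lemma act_ker p x : G x = 0 -> act p x = (p`_0 : R) *: x.
Proof.
move=> Hx; rewrite (act_ext (m := (size p).+1)) // big_ord_recl /=.
rewrite big1 ?addr0 // => i _; rewrite add0n -iterS iterSr Hx.
by rewrite (lin0 (iter_lin _)) scaler0.
Qed.

Lemma vasc_nz (n : nat) (v : 'I_n -> N)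
  (span : forall x, exists c : 'I_n -> R, x = \sum_(k < n) c k *: v k)
  (surj : forall y, exists x, y = G x) :
  forall x, G x = 0 -> x = 0.
Proof.
have [w Hw] : exists w : 'I_n -> N, forall i, v i = G (w i).
  by apply: (@fin_all_exists _ (fun _ => N) (fun i u => v i = G u)) => i; apply: surj.
have [c Hc] : exists c : 'I_n -> 'I_n -> R,
    forall i, w i = \sum_(k < n) c i k *: v k.
  by apply: (@fin_all_exists _ (fun _ => 'I_n -> R)
    (fun i u => w i = \sum_(k < n) u k *: v k)) => i; apply: span.
pose A : 'M[{poly R'}]_n :=
  \matrix_(i, j) (((i == j)%:R : R')%:P - ((c i j : R')%:P * 'X)).
have HA : forall i, \sum_(j < n) act (A i j) (v j) = 0.
  move=> i; under eq_bigr => j _ do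
    rewrite mxE actD actN actXr !actC.
  rewrite big_split /= sumrN.
  have -> : \sum_(j < n) ((i == j)%:R : R') *: v j = v i.
    rewrite (bigD1 i) //= eqxx scale1r big1 ?addr0 // => j Hj.
    by rewrite eq_sym (negbTE Hj) scale0r.
  by rewrite Hw Hc (lin_sum linG); under eq_bigr => j _ do rewrite (linZ linG);
    rewrite subrr.
have Hdet : forall k, act (\det A) (v k) = 0.
  move=> k.
  have E1 : \sum_(j < n) act (((\det A)%:M : 'M[{poly R'}]_n) k j) (v j)
      = act (\det A) (v k).
    rewrite (bigD1 k) //= mxE eqxx mulr1n big1 ?addr0 // => j Hj.
    by rewrite mxE eq_sym (negbTE Hj) mulr0n act0.
  rewrite -E1 -(mul_adj_mx A).
under eq_bigr => j _ do rewrite mxE act_sump.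
  rewrite exchange_big /= big1 // => i _.
  under eq_bigr => j _ do rewrite actM.
  by rewrite -(lin_sum (act_lin _)) HA (lin0 (act_lin _)).
have Hdet2 : forall y, act (\det A) y = 0.
  move=> y; have [d ->] := span y.
  rewrite (lin_sum (act_lin _)) big1 // => k _.
  by rewrite (linZ (act_lin _)) Hdet scaler0.
have H0 : (\det A)`_0 = 1.
  rewrite -horner_coef0 -horner_evalE -det_map_mx.
  have -> : map_mx (horner_eval (0 : R')) A = 1%:M.
    apply/matrixP => i j; rewrite !mxE horner_evalE.
    by rewrite hornerD hornerN hornerM hornerX mulr0 subr0 hornerC.
  by rewrite det1.
by move=> x Gx; have := Hdet2 x; rewrite act_ker // H0 scale1r.
Qed.
End NZ.

Lemma vasc (n : nat) (v : 'I_n -> N)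
  (span : forall x, exists c : 'I_n -> R, x = \sum_(k < n) c k *: v k)
  (surj : forall y, exists x, y = G x) :
  forall x, G x = 0 -> x = 0.
Proof.
case: (eqVneq (1 : R) 0) => [E|h1] x Hx; last exact: (vasc_nz h1 span surj Hx).
by rewrite -[x]scale1r E scale0r.
Qed.
End Vasc.
Section Dec.
Variable R : comPzRingType.

Definition dec (N E : lmodType R) (n : nat) :=
  exists (io : 'I_n -> E -> N) (pr : 'I_n -> N -> E),
  [/\ forall k, lin (io k), forall k, lin (pr k),
      forall k k' e, pr k' (io k e) = (if k == k' then e else 0)
    & forall y, y = \sum_(k < n) io k (pr k y)].

Lemma lin_comp (A B D : lmodType R) (F : A -> B) (G : B -> D) :
  lin F -> lin G -> lin (fun x => G (F x)).
Proof. by move=> HF HG a x y; rewrite HF HG. Qed.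

Lemma lin_sumF (A B : lmodType R) (n : nat) (F : 'I_n -> A -> B) :
  (forall k, lin (F k)) -> lin (fun x => \sum_(k < n) F k x).
Proof.
move=> HF a x y; rewrite scaler_sumr -big_split; apply: eq_bigr => k _.
exact: HF.
Qed.

Lemma lin_inj (A B : lmodType R) (F : A -> B) : lin F ->
  (forall x, F x = 0 -> x = 0) -> forall x y, F x = F y -> x = y.
Proof.
move=> HF Hi x y E; apply/eqP; rewrite -subr_eq0; apply/eqP; apply: Hi.
move: (HF (-1) y x); rewrite (scaleN1r y) (scaleN1r (F y)) addrC => ->.
by rewrite E addNr.
Qed.

Lemma dec0 (N E : lmodType R) : (forall y : N, y = 0) -> dec N E 0.
Proof.
move=> H; exists (fun _ _ => 0), (fun _ _ => 0); split.
- by move=> k a x y; rewrite scaler0 addr0.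
- by move=> k a x y; rewrite scaler0 addr0.
- by case.
- by move=> y; rewrite big_ord0; apply: H.
Qed.

Lemma inv_fun (A B : lmodType R) (F : A -> B) :
  (forall y, exists x, y = F x) -> exists G : B -> A, forall y, F (G y) = y.
Proof.
move=> H; exists (fun y => proj1_sig (constructive_indefinite_description _ (H y))).
by move=> y; case: constructive_indefinite_description.
Qed.

Lemma dec_bij (N0 N1 E : lmodType R) (n : nat) (F : N0 -> N1) :
  dec N0 E n -> lin F -> (forall x, F x = 0 -> x = 0) ->
  (forall y, exists x, y = F x) -> dec N1 E n.
Proof.
move=> [io [pr [Hio Hpr Hpi Hs]]] HF Hi Hsu.
have [Gi HG] := inv_fun Hsu.
have FI := lin_inj HF Hi.
have HGF : forall x, Gi (F x) = x by move=> x; apply: FI; rewrite HG.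
have linG : lin Gi by move=> a x y; apply: FI; rewrite HF !HG.
exists (fun k e => F (io k e)), (fun k y => pr k (Gi y)); split.
- by move=> k; apply: lin_comp.
- by move=> k; apply: lin_comp.
- by move=> k k' e; rewrite HGF Hpi.
- by move=> y; rewrite -(lin_sum HF) -Hs HG.
Qed.

Lemma widen_lift (n : nat) (k : 'I_n) : widen_ord (leqnSn n) k = lift ord_max k.
Proof. by apply: val_inj; rewrite /= /bump leqNgt ltn_ord. Qed.

Lemma dec_ext (N0 N1 E : lmodType R) (n : nat) (F : N0 -> N1) (S : E -> N1)
  (P : N1 -> E) : dec N0 E n -> lin F -> lin S -> lin P ->
  (forall x, F x = 0 -> x = 0) -> (forall x, P (F x) = 0) ->
  (forall e, P (S e) = e) -> (forall y, exists x, y - S (P y) = F x) ->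
  dec N1 E n.+1.
Proof.
move=> [io [pr [Hio Hpr Hpi Hs]]] HF HS HP Hi HPF HPS Hsu.
have FI := lin_inj HF Hi.
have [r Hr] : exists r : N1 -> N0, forall y, F (r y) = y - S (P y).
  exists (fun y => proj1_sig (constructive_indefinite_description _ (Hsu y))).
  by move=> y; case: constructive_indefinite_description.
have linr : lin r.
  move=> a x y; apply: FI; rewrite HF !Hr HP HS.
  by rewrite scalerBr addrACA opprD.
have HrF : forall x, r (F x) = x.
  by move=> x; apply: FI; rewrite Hr HPF (lin0 HS) subr0.
have HrS : forall e, r (S e) = 0.
  by move=> e; apply: Hi; rewrite Hr HPS subrr.
pose io' (k : 'I_n.+1) : E -> N1 :=
  if unlift ord_max k is Some k0 then fun e => F (io k0 e) else S.
pose pr' (k : 'I_n.+1) : N1 -> E :=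
  if unlift ord_max k is Some k0 then fun y => pr k0 (r y) else P.
exists io', pr'; split.
- move=> k; rewrite /io'; case: (unlift _ _) => [k0|] //.
  exact: lin_comp.
- move=> k; rewrite /pr'; case: (unlift _ _) => [k0|] //.
  exact: lin_comp.
- move=> k k' e; rewrite /io' /pr'.
  case: (unliftP ord_max k) => [k0 ->|->]; case: (unliftP ord_max k') => [k0' ->|->].
  + by rewrite HrF Hpi (inj_eq lift_inj).
  + by rewrite HPF eq_sym (negbTE (neq_lift _ _)).
  + by rewrite HrS (lin0 (Hpr k0')) (negbTE (neq_lift _ _)).
  + by rewrite HPS eqxx.
- move=> y; rewrite big_ord_recr /=.
  rewrite {2}/io' {2}/pr' unlift_none.
  under eq_bigr => k _ do rewrite widen_lift /io' /pr' liftK.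
  by rewrite -(lin_sum HF) -Hs Hr subrK.
Qed.

Lemma ibn (N E : lmodType R) (a b nv : nat) (v : 'I_nv -> N)
  (span : forall x, exists c : 'I_nv -> R, x = \sum_(k < nv) c k *: v k)
  (e0 : E) : e0 != 0 -> dec N E a -> dec N E b -> a = b.
Proof.
move=> He0.
suff H : forall a b, dec N E a -> dec N E b -> (b < a)%N -> False.
  move=> Ha Hb; case: (ltngtP a b) => // Hab; exfalso.
  - exact: H Hb Ha Hab.
  - exact: H Ha Hb Hab.
move=> {}a {}b [io [pr [Hio Hpr Hpi Hs]]] [io' [pr' [Hio' Hpr' Hpi' Hs']]] Hba.
pose w (l : 'I_b) : 'I_a := widen_ord (ltnW Hba) l.
pose G (y : N) := \sum_(l < b) io' l (pr (w l) y).
have linG : lin G by apply: lin_sumF => l; apply: lin_comp.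
have Hw : forall l l', (w l' == w l) = (l' == l).
  by move=> l l'; apply/eqP/eqP => [/(congr1 val) /= Ev|->]; [apply: val_inj|].
have surj : forall y, exists x, y = G x.
  move=> y; exists (\sum_(l < b) io (w l) (pr' l y)); rewrite /G {1}(Hs' y).
  apply: eq_bigr => l _; congr (io' l _).
  rewrite (lin_sum (Hpr _)) (bigD1 l) //= Hpi eqxx big1 ?addr0 // => l' Hl'.
  by rewrite Hpi Hw (negbTE Hl').
have a0 : (0 < a)%N := leq_ltn_trans (leq0n b) Hba.
have Hla : (a.-1 < a)%N by rewrite ltn_predL.
pose last : 'I_a := Ordinal Hla.
have Hx : G (io last e0) = 0.
  rewrite /G big1 // => l _; rewrite Hpi.
  case: eqP => [/(congr1 val) /= Ev|_]; last exact: (lin0 (Hio' l)).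
  have := ltn_ord l.
  rewrite -Ev => Hc; exfalso; move: (Hba); by rewrite -(prednK a0) ltnS leqNgt Hc.
have := vasc linG span surj Hx => Ex.
have := Hpi last last e0; rewrite eqxx Ex (lin0 (Hpr _)) => E0.
by rewrite -E0 eqxx in He0.
Qed.
End Dec.
Section S.
Set Default Proof Using "All".
Variables (R : comPzRingType) (C : triData R) (HC : triangulated C).
Variables (t : nat) (le : rel 'I_t) (Theta Q : 'I_t -> Ob C)
  (HS : ThetaProjSystem le Theta Q) (Hfin : HomFinite C).
Local Notation comp_assoc := (Defs.comp_assoc HC).
Local Notation comp_id_l := (Defs.comp_id_l HC).
Local Notation comp_id_r := (Defs.comp_id_r HC).
Local Notation comp_linear_l := (Defs.comp_linear_l HC).
Local Notation comp_linear_r := (Defs.comp_linear_r HC).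
Local Notation zero_exists := (Defs.zero_exists HC).
Local Notation biprod_exists := (Defs.biprod_exists HC).
Local Notation shift_comp := (Defs.shift_comp HC).
Local Notation shift_id := (Defs.shift_id HC).
Local Notation shift_linear := (Defs.shift_linear HC).
Local Notation shift_full := (Defs.shift_full HC).
Local Notation shift_faithful := (Defs.shift_faithful HC).
Local Notation shift_esurj := (Defs.shift_esurj HC).
Local Notation TR1_iso := (Defs.TR1_iso HC).
Local Notation TR1_id := (Defs.TR1_id HC).
Local Notation TR1_cone := (Defs.TR1_cone HC).
Local Notation TR2 := (Defs.TR2 HC).
Local Notation TR3 := (Defs.TR3 HC).
Local Notation TR4 := (Defs.TR4 HC).
Local Notation Ob := (Ob C).
Local Notation Hom := (@Defs.Hom R C).
Local Notation comp := Defs.comp.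
Local Notation idm := Defs.idm.
Local Notation shift := Defs.shift.
Local Notation shiftH := Defs.shiftH.
Local Notation Dist := Defs.Dist.

Lemma dbl0 (V : zmodType) (x : V) : x = x + x -> x = 0.
Proof. by move=> H; have := subrr x; rewrite {1}H addrK. Qed.

Lemma compDl (X Y Z : Ob) (g g' : Hom Y Z) (f : Hom X Y) :
  comp (g + g') f = comp g f + comp g' f.
Proof. by have := comp_linear_l 1 g g' f; rewrite !scale1r. Qed.
Lemma compDr (X Y Z : Ob) (g : Hom Y Z) (f f' : Hom X Y) :
  comp g (f + f') = comp g f + comp g f'.
Proof. by have := comp_linear_r 1 g f f'; rewrite !scale1r. Qed.
Lemma comp0l (X Y Z : Ob) (f : Hom X Y) : comp (0 : Hom Y Z) f = 0.
Proof. by apply: dbl0; rewrite -compDl addr0. Qed.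
Lemma comp0r (X Y Z : Ob) (g : Hom Y Z) : comp g (0 : Hom X Y) = 0.
Proof. by apply: dbl0; rewrite -compDr addr0. Qed.
Lemma compNl (X Y Z : Ob) (g : Hom Y Z) (f : Hom X Y) : comp (- g) f = - comp g f.
Proof. apply/eqP; rewrite -subr_eq0 opprK -compDl addNr comp0l //. Qed.
Lemma compNr (X Y Z : Ob) (g : Hom Y Z) (f : Hom X Y) : comp g (- f) = - comp g f.
Proof. apply/eqP; rewrite -subr_eq0 opprK -compDr addNr comp0r //. Qed.
Lemma compBl (X Y Z : Ob) (g g' : Hom Y Z) (f : Hom X Y) :
  comp (g - g') f = comp g f - comp g' f.
Proof. by rewrite compDl compNl. Qed.
Lemma compBr (X Y Z : Ob) (g : Hom Y Z) (f f' : Hom X Y) :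
  comp g (f - f') = comp g f - comp g f'.
Proof. by rewrite compDr compNr. Qed.
Lemma compZl (X Y Z : Ob) (a : R) (g : Hom Y Z) (f : Hom X Y) :
  comp (a *: g) f = a *: comp g f.
Proof. by have := comp_linear_l a g 0 f; rewrite !addr0 comp0l addr0. Qed.
Lemma compZr (X Y Z : Ob) (a : R) (g : Hom Y Z) (f : Hom X Y) :
  comp g (a *: f) = a *: comp g f.
Proof. by have := comp_linear_r a g f 0; rewrite !addr0 comp0r addr0. Qed.
Lemma shiftD (X Y : Ob) (f f' : Hom X Y) : shiftH (f + f') = shiftH f + shiftH f'.
Proof. by have := shift_linear 1 f f'; rewrite !scale1r. Qed.
Lemma shift0 (X Y : Ob) : shiftH (0 : Hom X Y) = 0.
Proof. by apply: dbl0; rewrite -shiftD addr0. Qed.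
Lemma shiftN (X Y : Ob) (f : Hom X Y) : shiftH (- f) = - shiftH f.
Proof. apply/eqP; rewrite -subr_eq0 opprK -shiftD addNr shift0 //. Qed.
Lemma shiftB (X Y : Ob) (f f' : Hom X Y) : shiftH (f - f') = shiftH f - shiftH f'.
Proof. by rewrite shiftD shiftN. Qed.
Lemma shift_inj0 (X Y : Ob) (f : Hom X Y) : shiftH f = 0 -> f = 0.
Proof. by rewrite -(shift0 X Y) => /shift_faithful. Qed.

Lemma zero_from (X Y : Ob) : IsZero X -> forall f : Hom X Y, f = 0.
Proof. by move=> HX f; rewrite -(comp_id_r f) HX comp0r. Qed.
Lemma zero_to (X Y : Ob) : IsZero Y -> forall f : Hom X Y, f = 0.
Proof. by move=> HY f; rewrite -(comp_id_l f) HY comp0l. Qed.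
Lemma zero_shift (X : Ob) : IsZero X -> IsZero (shift X).
Proof. by rewrite /IsZero -shift_id => ->; rewrite shift0. Qed.

Lemma rot (X Y Z : Ob) (f : Hom X Y) (g : Hom Y Z) (h : Hom Z (shift X)) :
  Dist f g h -> Dist g h (- shiftH f).
Proof. by move/TR2. Qed.

Lemma dist_id (W Z : Ob) : IsZero Z -> Dist (idm W) (0 : Hom W Z) 0.
Proof. exact: TR1_id. Qed.

Lemma dist_id' (W X0 : Ob) : IsZero X0 -> Dist (0 : Hom X0 W) (idm W) 0.
Proof.
move=> H0; apply/TR2; rewrite shift0 oppr0; apply: dist_id.
exact: zero_shift.
Qed.

Lemma comp_dist (X Y Z : Ob) (f : Hom X Y) (g : Hom Y Z) (h : Hom Z (shift X)) :
  Dist f g h -> comp g f = 0.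
Proof.
move=> H; have [Z0 HZ0] := zero_exists.
have [c [H1 _]] := TR3 (dist_id X HZ0) H (a := idm X) (b := f) erefl.
by rewrite comp0r in H1.
Qed.

Lemma exact_cov (X Y Z : Ob) (f : Hom X Y) (g : Hom Y Z) (h : Hom Z (shift X)) :
  Dist f g h -> forall (W : Ob) (w : Hom W Y), comp g w = 0 ->
  exists v : Hom W X, w = comp f v.
Proof.
move=> H W w Hw; have [Z0 HZ0] := zero_exists.
have T1 := rot (dist_id W HZ0); have T2 := rot H.
have E : comp (0 : Hom Z0 Z) (0 : Hom W Z0) = comp g w by rewrite comp0r Hw.
have [c [_ H2]] := TR3 T1 T2 E.
move: H2; rewrite compNr compNl shift_id comp_id_r => /oppr_inj H2.
have [v Hv] := shift_full c; exists v; apply: shift_faithful.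
by rewrite shift_comp // Hv.
Qed.

Lemma exact_contra (X Y Z : Ob) (f : Hom X Y) (g : Hom Y Z) (h : Hom Z (shift X)) :
  Dist f g h -> forall (W : Ob) (x : Hom Y W), comp x f = 0 ->
  exists z : Hom Z W, x = comp z g.
Proof.
move=> H W x Hx; have [Z0 HZ0] := zero_exists.
have T2 := dist_id' W HZ0.
have E : comp x f = comp (0 : Hom Z0 W) (0 : Hom X Z0) by rewrite comp0r Hx.
have [c [H1 _]] := TR3 H T2 E.
by exists c; rewrite H1 comp_id_l.
Qed.

Lemma comp_dist2 (X Y Z : Ob) (f : Hom X Y) (g : Hom Y Z) (h : Hom Z (shift X)) :
  Dist f g h -> comp h g = 0.
Proof. by move/rot/comp_dist. Qed.

Lemma comp_dist3 (X Y Z : Ob) (f : Hom X Y) (g : Hom Y Z) (h : Hom Z (shift X)) :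
  Dist f g h -> comp (shiftH f) h = 0.
Proof. by move/rot/rot/comp_dist; rewrite compNl => /eqP; rewrite oppr_eq0 => /eqP. Qed.

Lemma rot3 (X Y Z : Ob) (f : Hom X Y) (g : Hom Y Z) (h : Hom Z (shift X)) :
  Dist f g h -> Dist (- shiftH f) (- shiftH g) (- shiftH h).
Proof. by move/rot/rot/rot. Qed.

Lemma left_exact (X Y Z : Ob) (f : Hom X Y) (g : Hom Y Z) (h : Hom Z (shift X)) :
  Dist f g h -> forall (W : Ob) (y : Hom W X),
  (forall u : Hom (shift W) Z, u = 0) -> comp f y = 0 -> y = 0.
Proof.
move=> H W y HW Hy; have H2 := rot (rot H).
have E : comp (- shiftH f) (shiftH y) = 0 by rewrite compNl -shift_comp Hy shift0 oppr0.
have [v Hv] := exact_cov H2 E.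
by apply: shift_inj0; rewrite Hv (HW v) comp0r.
Qed.

Lemma Iso_sym (X Y : Ob) : Iso X Y -> Iso Y X.
Proof. by case=> f [g [H1 H2]]; exists g, f. Qed.

Lemma IsIso_id (X : Ob) : IsIso (idm X).
Proof. by exists (idm X); rewrite comp_id_l. Qed.

Lemma Iso_zero (X Y : Ob) : Iso X Y -> IsZero X -> IsZero Y.
Proof.
case=> f [g [H1 H2]] HX; rewrite /IsZero -H2.
by rewrite (zero_from HX f) comp0l.
Qed.

Lemma fiber (Y Z : Ob) (q : Hom Y Z) :
  exists (X : Ob) (f : Hom X Y) (h : Hom Z (shift X)), Dist f q h.
Proof.
have [Z1 [g1 [h1 H]]] := TR1_cone q.
have [X [al [be [Hba Hab]]]] := shift_esurj Z1.
have [f0 Hf0] := shift_full (comp h1 al).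
exists X, (- f0), (comp be g1).
apply/TR2; rewrite shiftN Hf0 opprK.
apply: (TR1_iso (a := idm Y) (b := idm Z) (c := be) _ _ _ _ _ _ H).
- exact: IsIso_id.
- exact: IsIso_id.
- by exists al.
- by rewrite comp_id_l comp_id_r.
- by rewrite comp_id_r.
- by rewrite shift_id comp_id_l -comp_assoc Hab comp_id_r.
Qed.

Lemma cone_unique (X Y Z Z' : Ob) (f : Hom X Y) (g : Hom Y Z) (h : Hom Z (shift X))
  (g' : Hom Y Z') (h' : Hom Z' (shift X)) :
  Dist f g h -> Dist f g' h' -> Iso Z Z'.
Proof.
move=> H H'.
have E : comp (idm Y) f = comp f (idm X) by rewrite comp_id_l comp_id_r.
have [c [Hc1 Hc2]] := TR3 H H' E.
have [d [Hd1 Hd2]] := TR3 H' H E.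
rewrite comp_id_r in Hc1; rewrite comp_id_r in Hd1.
rewrite shift_id comp_id_l in Hc2; rewrite shift_id comp_id_l in Hd2.
have inv : forall (Z0 : Ob) (g0 : Hom Y Z0) (h0 : Hom Z0 (shift X)),
    Dist f g0 h0 -> forall (e : Hom Z0 Z0), comp e g0 = g0 -> comp h0 e = h0 ->
    exists e', comp e' e = idm Z0 /\ comp e e' = idm Z0.
  move=> Z0 g0 h0 H0 e He1 He2.
  have Hxg : comp (e - idm Z0) g0 = 0 by rewrite compBl He1 comp_id_l subrr.
  have Hhx : comp h0 (e - idm Z0) = 0 by rewrite compBr He2 comp_id_r subrr.
  have [y Hy] := exact_contra (rot H0) Hxg.
  have Ee : e = idm Z0 + (e - idm Z0) by rewrite addrC subrK.
  move: Hxg Hhx Hy Ee; move: (e - idm Z0) => x _ Hhx Hy ->.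
  have Hxx : comp x x = 0 by rewrite {1}Hy -comp_assoc Hhx comp0r.
  exists (idm Z0 - x).
  rewrite !(compDl, compDr, compBl, compBr, comp_id_l, comp_id_r).
  rewrite compNl compNr Hxx oppr0 !addr0.
  split. rewrite addrK. done. rewrite subrK. done.
have [e1 [He1 _]] : exists e', comp e' (comp d c) = idm Z /\ comp (comp d c) e' = idm Z.
  by apply: (inv _ _ _ H); [rewrite -comp_assoc Hc1 Hd1 | rewrite comp_assoc -Hd2 -Hc2].
have [e2 [_ He2]] : exists e', comp e' (comp c d) = idm Z' /\ comp (comp c d) e' = idm Z'.
  by apply: (inv _ _ _ H'); [rewrite -comp_assoc Hd1 Hc1 | rewrite comp_assoc -Hc2 -Hd2].
exists c; exists (comp e1 d); split.
  by rewrite -comp_assoc.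
have F1 : comp c (comp d e2) = idm Z' by rewrite comp_assoc He2.
have F2 : comp (comp e1 d) c = idm Z by rewrite -comp_assoc He1.
have E2 : comp e1 d = comp d e2.
  by rewrite -[LHS]comp_id_r -F1 comp_assoc F2 comp_id_l.
by rewrite E2 comp_assoc He2.
Qed.

Lemma pbT (P : Prop) : P -> pb P = true.
Proof. by rewrite /pb; case: excluded_middle_informative. Qed.
Lemma pbF (P : Prop) : ~ P -> pb P = false.
Proof. by rewrite /pb; case: excluded_middle_informative. Qed.

Lemma le_refl' : reflexive le.
Proof. by case: (tps_order HS). Qed.
Lemma le_anti : antisymmetric le.
Proof. by case: (tps_order HS). Qed.
Lemma le_trans' : transitive le.
Proof. by case: (tps_order HS). Qed.
Lemma le_total' : total le.
Proof. by case: (tps_order HS). Qed.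

Lemma Thom (i j : 'I_t) : le i j -> j != i -> forall u : Hom (Theta j) (Theta i), u = 0.
Proof. by move=> H1 H2 u; apply: (tps_hom HS H1 H2). Qed.

Lemma Iso_Theta (i j : 'I_t) : Iso (Theta j) (Theta i) -> j = i.
Proof.
case=> f [g [H1 H2]]; case: (eqVneq j i) => // Hne; exfalso.
case/orP: (le_total' i j) => Hle.
- apply: (tps_nonzero HS (i := i)); rewrite /IsZero -H2 (Thom Hle Hne f) comp0l //.
- apply: (tps_nonzero HS (i := j)); rewrite /IsZero -H1 (Thom Hle _ g) ?comp0l //.
  by rewrite eq_sym.
Qed.

Lemma Q_sh1 (i j : 'I_t) (u : Hom (Q i) (shift (Theta j))) : u = 0.
Proof.
have [Qs [[ins [prs [Hpi _]]] [H1 _]]] := tps_sum HS.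
by rewrite -(comp_id_r u) -(Hpi i) comp_assoc (H1 j (comp u (prs i))) comp0l.
Qed.

Lemma Q_shm1 (i j : 'I_t) (u : Hom (shift (Q i)) (Theta j)) : u = 0.
Proof.
have [Qs [[ins [prs [Hpi _]]] [_ H2]]] := tps_sum HS.
have [Y [f [g [Hgf Hfg]]]] := shift_esurj (Theta j).
have [v Hv] := shift_full (comp g u).
have Hiso : Iso (shift Y) (Theta j) by exists f, g.
have v0 : v = 0.
  by rewrite -(comp_id_r v) -(Hpi i) comp_assoc (H2 j Y Hiso (comp v (prs i))) comp0l.
by rewrite -(comp_id_l u) -Hfg -comp_assoc -Hv v0 shift0 comp0r.
Qed.

Inductive FL : Ob -> seq 'I_t -> Prop :=
| FL0 (Z : Ob) : IsZero Z -> FL Z [::]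
| FLS (M0 M1 : Ob) (l : seq 'I_t) (j : 'I_t) (f : Hom M0 M1) (g : Hom M1 (Theta j))
    (h : Hom (Theta j) (shift M0)) : FL M0 l -> Dist f g h -> FL M1 (rcons l j).

Lemma FL_cov (W M : Ob) (l : seq 'I_t) : FL M l ->
  (forall j, j \in l -> forall u : Hom W (Theta j), u = 0) ->
  forall u : Hom W M, u = 0.
Proof.
elim=> [Z HZ|M0 M1 l' j f g h _ IH Hd] Hl u; first exact: zero_to.
have Hgu : comp g u = 0 by apply: Hl; rewrite mem_rcons inE eqxx.
have [v Hv] := exact_cov Hd Hgu.
rewrite Hv (IH _ v) ?comp0r // => j' Hj'; apply: Hl.
by rewrite mem_rcons inE Hj' orbT.
Qed.

Lemma FL_contra (W M : Ob) (l : seq 'I_t) : FL M l ->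
  (forall j, j \in l -> forall u : Hom (Theta j) W, u = 0) ->
  forall u : Hom M W, u = 0.
Proof.
elim=> [Z HZ|M0 M1 l' j f g h _ IH Hd] Hl u; first exact: zero_from.
have Huf : comp u f = 0.
  apply: IH => j' Hj'; apply: Hl; by rewrite mem_rcons inE Hj' orbT.
have [z Hz] := exact_contra Hd Huf.
by rewrite Hz (Hl j _ z) ?comp0l // mem_rcons inE eqxx.
Qed.

Lemma FL_cov1 (W M : Ob) (l : seq 'I_t) : FL M l ->
  (forall j, j \in l -> forall u : Hom W (shift (Theta j)), u = 0) ->
  forall u : Hom W (shift M), u = 0.
Proof.
elim=> [Z HZ|M0 M1 l' j f g h _ IH Hd] Hl u.
  by apply: zero_to; apply: zero_shift.
have Hd3 := rot3 Hd.
have Hgu : comp (- shiftH g) u = 0 by apply: Hl; rewrite mem_rcons inE eqxx.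
have [v Hv] := exact_cov Hd3 Hgu.
rewrite Hv (IH _ v) ?comp0r // => j' Hj'; apply: Hl.
by rewrite mem_rcons inE Hj' orbT.
Qed.

Lemma FL_iso (M M' : Ob) (l : seq 'I_t) : FL M l -> Iso M M' -> FL M' l.
Proof.
case=> [Z HZ|M0 M1 l' j f g h H0 Hd] HI.
  by apply: FL0; apply: Iso_zero HI HZ.
case: HI => al [be [Hba Hab]].
apply: (FLS (f := comp al f) (g := comp g be) (h := h) H0).
apply: (TR1_iso (a := idm M0) (b := al) (c := idm (Theta j)) _ _ _ _ _ _ Hd).
- exact: IsIso_id.
- by exists be.
- exact: IsIso_id.
- by rewrite comp_id_r.
- by rewrite comp_id_l -comp_assoc Hba comp_id_r.
- by rewrite shift_id comp_id_l comp_id_r.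
Qed.

Lemma rec2FL (P : Ob -> Prop) (Rj : 'I_t -> Prop)
  (HP : forall Y, P Y -> exists j, Rj j /\ Y = Theta j)
  (M : Ob) (xi : filtration P M) :
  exists l, [/\ FL M l, (forall j, j \in l -> Rj j), size l = flen xi &
    forall i, (\sum_(k < (flen xi).+1) pb (Iso (fX xi k) (Theta i)))%N
              = count (pred1 i) l].
Proof.
suff : forall k, (k <= flen xi)%N -> exists l, [/\ FL (fM xi k.+1) l,
    (forall j, j \in l -> Rj j), size l = k &
    forall i, (\sum_(k' < k.+1) pb (Iso (fX xi k') (Theta i)))%N = count (pred1 i) l].
  by move/(_ (flen xi) (leqnn _)); rewrite (f_Mn xi).
elim=> [_|k IH Hk].
  exists [::]; split=> //.
  - apply: FL0.
    have Hd := f_dist (f := xi) (leq0n _).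
    have Hg : comp (fg xi 0) (idm (fM xi 1)) = 0 by apply: zero_to; apply: (f_X0 xi).
    have [v Hv] := exact_cov Hd Hg.
    by rewrite /IsZero Hv (zero_from (f_M0 xi) (ff xi 0)) comp0l.
  - move=> i; rewrite big_ord1 pbF //= => HI.
    by apply: (tps_nonzero HS (i := i)); apply: (Iso_zero HI (f_X0 xi)).
have [l [H1 H2 H3 H4]] := IH (ltnW Hk).
have [j [Hj EX]] := HP _ (f_Xin (f := xi) (k := k.+1) Hk).
have Hd := f_dist (f := xi) Hk.
move: (fg xi k.+1) (fh xi k.+1) Hd; rewrite EX => g h Hd.
exists (rcons l j); split.
- exact: FLS H1 Hd.
- by move=> j'; rewrite mem_rcons inE => /orP [/eqP -> //|]; apply: H2.
- by rewrite size_rcons H3.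
- move=> i; rewrite big_ord_recr /= H4 -cats1 count_cat /= addn0; congr (_ + _)%N.
  rewrite EX; case: (boolP (j == i)) => [/eqP -> | Hne].
    by rewrite pbT //; exists (idm _), (idm _); rewrite comp_id_l.
  by rewrite pbF //= => /Iso_Theta E; rewrite E eqxx in Hne.
Qed.

Lemma Text (i j : 'I_t) : le i j -> forall u : Hom (Theta j) (shift (Theta i)), u = 0.
Proof.
move=> Hij u.
have [K [a [b [c [Hd [xi] HK]]]]] := tps_tri HS j.
have Hub : comp u b = 0 by apply: Q_sh1.
have [z Hz] := exact_contra (rot Hd) Hub.
have [w Hw] := shift_full z.
have [l [Hl Hl2 _ _]] := rec2FL (Rj := fun l => le j l /\ l != j)
  (fun Y (H : exists l, le j l /\ l != j /\ Y = Theta l) =>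
     let: ex_intro l (conj A (conj B E)) := H in ex_intro _ l (conj (conj A B) E)) xi.
have w0 : w = 0.
  apply: (FL_contra Hl) => l' /Hl2 [H1 H2]; apply: Thom.
    exact: le_trans' Hij H1.
  apply/eqP => E; move: H2; rewrite E => /eqP; apply.
  by apply: le_anti; rewrite Hij -E H1.
by rewrite Hz -Hw w0 shift0 comp0l.
Qed.

Lemma FL_nil (Z : Ob) : IsZero Z -> FL Z [::].
Proof. exact: FL0. Qed.

Lemma FL_rcons (M0 M1 : Ob) (l : seq 'I_t) (j : 'I_t) (f : Hom M0 M1)
  (g : Hom M1 (Theta j)) (h : Hom (Theta j) (shift M0)) :
  FL M0 l -> Dist f g h -> FL M1 (rcons l j).
Proof. exact: FLS. Qed.
Lemma Qshift_FL (m : 'I_t) (Z : Ob) (lz : seq 'I_t) : FL Z lz ->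
  forall u : Hom (shift (Q m)) Z, u = 0.
Proof. by move=> HZ; apply: (FL_cov HZ) => j _; apply: Q_shm1. Qed.

Lemma alpha_inj (m : 'I_t) (K : Ob) (a : Hom K (Q m)) (b : Hom (Q m) (Theta m))
  (c : Hom (Theta m) (shift K)) : Dist a b c -> HomZero (shift K) (Theta m) ->
  forall Y l, FL Y l -> (forall j, j \in l -> le j m) ->
  forall x : Hom (Theta m) Y, comp x b = 0 -> x = 0.
Proof.
move=> Hd HK Y l; elim=> [Z HZ|M0 M1 l' j f g h H0 IH Hd1] Hl x Hx.
  exact: zero_to.
have Hjm : le j m by apply: Hl; rewrite mem_rcons inE eqxx.
have Hgx : comp g x = 0.
  case: (eqVneq j m) => [Ejm|Hne].
    move: g h Hd1 x Hx; rewrite Ejm => g h Hd1 x Hx.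
    have Hb : comp (comp g x) b = 0 by rewrite -comp_assoc Hx comp0r.
    have [z Hz] := exact_contra (rot Hd) Hb.
    by rewrite Hz (HK z) comp0l.
  by apply: Thom => //; rewrite eq_sym.
have [v Hv] := exact_cov Hd1 Hgx.
have Hvb : comp v b = 0.
  apply: (left_exact Hd1 (Q_shm1 (i := m) (j := j))).
  by rewrite comp_assoc -Hv Hx.
rewrite Hv (IH _ v Hvb) ?comp0r // => j' Hj'; apply: Hl.
by rewrite mem_rcons inE Hj' orbT.
Qed.

Lemma theta_left (m : 'I_t) (Y W Z : Ob) (f : Hom Y W) (g : Hom W Z)
  (h : Hom Z (shift Y)) (l : seq 'I_t) : FL Y l -> (forall j, j \in l -> le j m) ->
  (forall u : Hom (shift (Q m)) Z, u = 0) -> Dist f g h ->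
  forall y : Hom (Theta m) Y, comp f y = 0 -> y = 0.
Proof.
move=> HY Hl HZ Hd y Hy.
have [K [a [b [c [Hd0 _ HK]]]]] := tps_tri HS m.
apply: (alpha_inj Hd0 HK HY Hl).
by apply: (left_exact Hd HZ); rewrite comp_assoc Hy comp0l.
Qed.

Lemma count_dec (m : 'I_t) (M : Ob) (l : seq 'I_t) : FL M l ->
  (forall j, j \in l -> le j m) ->
  dec (Hom (Theta m) M) (Hom (Theta m) (Theta m)) (count (pred1 m) l).
Proof.
elim=> [Z HZ|M0 M1 l' j f g h H0 IH Hd] Hl.
  by apply: dec0 => y; apply: zero_to.
have Hl' : forall j', j' \in l' -> le j' m.
  by move=> j' Hj'; apply: Hl; rewrite mem_rcons inE Hj' orbT.
have Hjm : le j m by apply: Hl; rewrite mem_rcons inE eqxx.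
have D0 := IH Hl'.
have linF : lin (fun y : Hom (Theta m) M0 => comp f y).
  by move=> a x y; rewrite comp_linear_r.
have injF : forall y : Hom (Theta m) M0, comp f y = 0 -> y = 0.
  exact: (theta_left H0 Hl' (Q_shm1 (i := m) (j := j)) Hd).
rewrite -cats1 count_cat /= addn0.
case: (eqVneq j m) => [Ejm|Hne].
  move: g h Hd; rewrite Ejm => g h Hd; rewrite addn1.
  have h0 : comp h (idm (Theta m)) = 0.
    apply: (FL_cov1 H0) => j' /Hl' Hj'; exact: Text.
  have [s Hs] := exact_cov (rot Hd) h0.
  apply: (dec_ext (S := fun e => comp s e) (P := fun y => comp g y) D0 linF).
  - by move=> a x y; rewrite comp_linear_r.
  - by move=> a x y; rewrite comp_linear_r.
  - exact: injF.
  - by move=> x; rewrite comp_assoc (comp_dist Hd) comp0l.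
  - by move=> e; rewrite comp_assoc -Hs comp_id_l.
  - move=> y; apply: (exact_cov Hd).
    by rewrite compBr comp_assoc -Hs comp_id_l subrr.
rewrite addn0; apply: (dec_bij D0 linF injF) => y.
have Hgy : comp g y = 0 by apply: Thom => //; rewrite eq_sym.
by have [v Hv] := exact_cov Hd Hgy; exists v.
Qed.
Lemma trunc (m : 'I_t) (M : Ob) (l : seq 'I_t) : FL M l ->
  (forall j, j \in l -> le j m) ->
  exists (A B : Ob) (io : Hom A M) (p : Hom M B) (de : Hom B (shift A)),
    [/\ Dist io p de, FL A (filter (pred1 m) l) & FL B (filter (predC1 m) l)].
Proof.
elim=> [Z HZ|M0 M1 l' j u g h H0 IH Hd] Hl.
  have [Z0 HZ0] := zero_exists.
  exists Z, Z0, (idm Z), 0, 0; split.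
  - exact: dist_id.
  - exact: FL_nil.
  - exact: FL_nil.
have Hl' : forall j', j' \in l' -> le j' m.
  by move=> j' Hj'; apply: Hl; rewrite mem_rcons inE Hj' orbT.
have [A0 [B0 [io0 [p0 [de0 [Hd0 HA0 HB0]]]]]] := IH Hl'.
rewrite !filter_rcons /=.
case: (eqVneq j m) => [Ejm|Hne].
  move: g h Hd; rewrite Ejm /= => g h Hd.
  have Hx : comp (shiftH p0) h = 0.
    apply: (FL_cov1 HB0) => j' ; rewrite mem_filter => /andP [_ Hj'].
    exact: Text (Hl' _ Hj').
  have [z Hz] := exact_contra (rot (rot Hd)) Hx.
  have [q' Hq'] := shift_full z.
  have Hq : comp (- q') u = p0.
    by apply: (shift_faithful); rewrite Hz -Hq' compNr shift_comp shiftN compNl.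
  have [A1 [io1 [de1 Hd1]]] := fiber (- q').
  have Hd0' : Dist (comp (- q') u) de0 (- shiftH io0) by rewrite Hq; apply: rot.
  have [f [g' [Hfg _ _ _ _]]] := TR4 Hd (rot Hd1) Hd0'.
  have [g0 Hg0] := shift_full g'.
  have [j0 Hj0] := shift_full (comp (shiftH g) (- shiftH io1)).
  exists A1, B0, io1, (- q'), de1; split=> //.
  apply: (FL_rcons (f := - g0) (g := - j0) (h := f) HA0).
  apply/TR2; apply/TR2.
  by rewrite !shiftN !opprK Hg0 Hj0.
rewrite /=.
have [B1 [p1 [de1 Hd1]]] := TR1_cone (comp u io0).
have [f [g' [Hfg _ _ _ _]]] := TR4 Hd0 Hd Hd1.
exists A0, B1, (comp u io0), p1, de1; split=> //.
exact: FL_rcons HB0 Hfg.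
Qed.

Lemma mono_lem (m : 'I_t) (A M B : Ob) (io : Hom A M) (p : Hom M B) (de : Hom B (shift A))
  (la lb : seq 'I_t) : Dist io p de -> FL A la -> (forall j, j \in la -> j = m) ->
  FL B lb ->
  forall A0 l0, FL A0 l0 -> (forall j, j \in l0 -> j = m) ->
  forall x : Hom A0 A, comp io x = 0 -> x = 0.
Proof.
move=> Hd HA Hla HB A0 l0; elim=> [Z HZ|M0 M1 l' j f g h H0 IH Hd1] Hl x Hx.
  exact: zero_from.
have Hl' : forall j', j' \in l' -> j' = m.
  by move=> j' Hj'; apply: Hl; rewrite mem_rcons inE Hj' orbT.
have Ejm : j = m by apply: Hl; rewrite mem_rcons inE eqxx.
move: g h Hd1; rewrite Ejm => g h Hd1.
have Hxf : comp x f = 0 by apply: IH => //; rewrite comp_assoc Hx comp0l.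
have [z Hz] := exact_contra Hd1 Hxf.
have Hiz : comp (comp io z) g = 0 by rewrite -comp_assoc -Hz.
have [w Hw] := exact_contra (rot Hd1) Hiz.
have h0 : h = 0.
  apply: (FL_cov1 H0) => j' /Hl' ->; apply: Text; exact: le_refl'.
have Hiz0 : comp io z = 0 by rewrite Hw h0 comp0r.
have z0 : z = 0.
  apply: (theta_left HA _ (Qshift_FL HB) Hd Hiz0).
  by move=> j' /Hla ->; exact: le_refl'.
by rewrite Hz z0 comp0l.
Qed.

Lemma trunc_cmp (m : 'I_t) (A B A' B' M : Ob) (io : Hom A M) (p : Hom M B)
  (de : Hom B (shift A)) (io' : Hom A' M) (p' : Hom M B') (de' : Hom B' (shift A'))
  (la lb la' lb' : seq 'I_t) :
  Dist io p de -> Dist io' p' de' ->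
  FL A la -> (forall j, j \in la -> j = m) ->
  FL B lb -> (forall j, j \in lb -> le j m /\ j != m) ->
  FL A' la' -> (forall j, j \in la' -> j = m) ->
  FL B' lb' -> (forall j, j \in lb' -> le j m /\ j != m) ->
  Iso B B'.
Proof.
move=> Hd Hd' HA Hla HB Hlb HA' Hla' HB' Hlb'.
have HAB : forall (X Y : Ob) (lx ly : seq 'I_t), FL X lx -> (forall j, j \in lx -> j = m) ->
    FL Y ly -> (forall j, j \in ly -> le j m /\ j != m) -> forall u : Hom X Y, u = 0.
  move=> X Y lx ly HX Hx HY Hy; apply: (FL_contra HX) => j /Hx ->.
  apply: (FL_cov HY) => j' /Hy [H1 H2]; apply: Thom => //; by rewrite eq_sym.
have [u0 Hu0] := exact_cov Hd' (HAB _ _ _ _ HA Hla HB' Hlb' (comp p' io)).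
have [v0 Hv0] := exact_cov Hd (HAB _ _ _ _ HA' Hla' HB Hlb (comp p io')).
have E1 : comp v0 u0 = idm A.
  apply/eqP; rewrite -subr_eq0; apply/eqP.
  apply: (mono_lem Hd HA Hla HB HA Hla).
  by rewrite compBr comp_assoc -Hv0 -Hu0 comp_id_r subrr.
have E2 : comp u0 v0 = idm A'.
  apply/eqP; rewrite -subr_eq0; apply/eqP.
  apply: (mono_lem Hd' HA' Hla' HB' HA' Hla').
  by rewrite compBr comp_assoc -Hu0 -Hv0 comp_id_r subrr.
have Hd'' : Dist io p' (comp (shiftH v0) de').
  apply: (TR1_iso (a := v0) (b := idm M) (c := idm B') _ _ _ _ _ _ Hd').
  - by exists u0.
  - exact: IsIso_id.
  - exact: IsIso_id.
  - by rewrite comp_id_l Hv0.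
  - by rewrite comp_id_l comp_id_r.
  - by rewrite comp_id_r.
exact: cone_unique Hd Hd''.
Qed.
Lemma exists_max (s : seq 'I_t) : s != [::] ->
  exists m, m \in s /\ forall j, j \in s -> le j m.
Proof.
elim: s => [//|x s IH] _.
case: (eqVneq s [::]) => [->|Hs].
  by exists x; split; rewrite ?inE ?eqxx // => j; rewrite inE => /eqP ->; apply: le_refl'.
have [m [Hm Hmax]] := IH Hs.
case/orP: (le_total' x m) => Hxm.
  exists m; split; first by rewrite inE Hm orbT.
  by move=> j; rewrite inE => /orP [/eqP ->|/Hmax].
exists x; split; first by rewrite inE eqxx.
move=> j; rewrite inE => /orP [/eqP ->|/Hmax Hj]; first exact: le_refl'.
exact: le_trans' Hj Hxm.
Qed.

Lemma main_count (n : nat) (s : seq 'I_t) : (size s <= n)%N ->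
  forall M l l', FL M l -> FL M l' -> {subset l <= s} -> {subset l' <= s} ->
  forall i, count (pred1 i) l = count (pred1 i) l'.
Proof.
elim: n s => [|n IHn] s Hsz M l l' Hl Hl' Hs Hs' i.
  move: Hsz; rewrite leqn0 => /nilP Es; move: Hs Hs'; rewrite Es.
  case: l Hl => [|x l] Hl; case: l' Hl' => [|x' l'] Hl' // Hs Hs'.
  - by have := Hs' x'; rewrite inE eqxx => /(_ isT).
  - by have := Hs x; rewrite inE eqxx => /(_ isT).
  - by have := Hs x; rewrite inE eqxx => /(_ isT).
case: (eqVneq s [::]) => [Es|Hne].
  move: Hs Hs'; rewrite Es.
  case: l Hl => [|x l] Hl; case: l' Hl' => [|x' l'] Hl' // Hs Hs'.
  - by have := Hs' x'; rewrite inE eqxx => /(_ isT).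
  - by have := Hs x; rewrite inE eqxx => /(_ isT).
  - by have := Hs x; rewrite inE eqxx => /(_ isT).
have [m [Hm Hmax]] := exists_max Hne.
have Hlm : forall j, j \in l -> le j m by move=> j /Hs /Hmax.
have Hlm' : forall j, j \in l' -> le j m by move=> j /Hs' /Hmax.
case: (eqVneq i m) => [->|Him].
  have [nv [v Hv]] := Hfin (Theta m) M.
  apply: (ibn (v := v) Hv (e0 := idm (Theta m))).
  - by apply/eqP; apply: (tps_nonzero HS (i := m)).
  - exact: count_dec Hl Hlm.
  - exact: count_dec Hl' Hlm'.
have [A [B [io [p [de [Hd HA HB]]]]]] := trunc Hl Hlm.
have [A' [B' [io' [p' [de' [Hd' HA' HB']]]]]] := trunc Hl' Hlm'.
have Hfa : forall l0 j, j \in [seq x <- l0 | pred1 m x] -> j = m.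
  by move=> l0 j; rewrite mem_filter => /andP [/eqP].
have HI : Iso B B'.
  apply: (trunc_cmp Hd Hd' HA (Hfa _) HB _ HA' (Hfa _) HB').
  - by move=> j; rewrite mem_filter => /andP [H1 /Hlm H2].
  - by move=> j; rewrite mem_filter => /andP [H1 /Hlm' H2].
have HB'' := FL_iso HB' (Iso_sym HI).
have E : forall l0, count (pred1 i) [seq x <- l0 | predC1 m x] = count (pred1 i) l0.
  move=> l0; rewrite count_filter; apply: eq_count => x /=.
  by case: (eqVneq x i) => // ->; rewrite Him.
rewrite -E -(E l').
apply: (IHn [seq x <- s | predC1 m x] _ B _ _ HB HB'').
- have H : (count (predC1 m) s < size s)%N.
    rewrite -[X in (_ < X)%N](count_predC (predC1 m) s) -addn1 leq_add2l.
    by rewrite -has_count; apply/hasP; exists m => //=; rewrite negbK.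
  by rewrite size_filter -ltnS (leq_trans H Hsz).
- by move=> j; rewrite !mem_filter => /andP [-> /Hs].
- by move=> j; rewrite !mem_filter => /andP [-> /Hs'].
Qed.

Lemma sum_count (l : seq 'I_t) : (\sum_(i < t) count (pred1 i) l)%N = size l.
Proof.
elim: l => [|x l IH] /=; first by rewrite big1.
rewrite big_split /= IH (bigD1 x) //= eqxx big1 // => i Hi.
by rewrite eq_sym (negbTE Hi).
Qed.

Lemma Q_noniso (i j : 'I_t) : i != j -> ~ Iso (Q i) (Q j).
Proof.
have key : forall i j : 'I_t, le i j -> j != i -> ~ Iso (Q j) (Q i).
  move=> {}i {}j Hij Hji [f [g [Hgf Hfg]]].
  have [K [a [b [c [Hd [xi] HK]]]]] := tps_tri HS i.
  have [K' [a' [b' [c' [Hd' [xi'] HK']]]]] := tps_tri HS j.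
  have Z : forall x : Hom (Q j) (Theta i), x = 0.
    move=> x.
    have [l [Hl Hl2 _ _]] := rec2FL (Rj := fun l => le j l /\ l != j)
      (fun Y (H : exists l, le j l /\ l != j /\ Y = Theta l) =>
         let: ex_intro l (conj A (conj B E)) := H in ex_intro _ l (conj (conj A B) E)) xi'.
    have Hxa : comp x a' = 0.
      apply: (FL_contra Hl) => l' /Hl2 [H1 H2] u; apply: Thom u.
        exact: le_trans' Hij H1.
      apply/eqP => E; move: H2; rewrite E => /eqP; apply.
      by apply: le_anti; rewrite Hij -E H1.
    have [z Hz] := exact_contra Hd' Hxa.
    by rewrite Hz (Thom Hij Hji z) comp0l.
  have b0 : b = 0 by rewrite -(comp_id_r b) -Hfg comp_assoc (Z (comp b f)) comp0l.
  have Hb : comp (idm (Theta i)) b = 0 by rewrite b0 comp0r.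
  have [z Hz] := exact_contra (rot Hd) Hb.
  by apply: (tps_nonzero HS (i := i)); rewrite /IsZero Hz (HK z) comp0l.
move=> Hne HI; case/orP: (le_total' i j) => H.
- by apply: (key i j H); [rewrite eq_sym | apply: Iso_sym].
- exact: (key j i H Hne HI).
Qed.

End S.

Theorem proposition5p11 (R : comPzRingType) (C : triData R)
  (HC : triangulated C) (Hfin : HomFinite C)
  (t : nat) (le : rel 'I_t) (Theta Q : 'I_t -> Ob C)
  (HS : ThetaProjSystem le Theta Q) :
  (forall (M : Ob C) (xi xi' : filtration (classOf Theta) M) (i : 'I_t),
      mult xi i = mult xi' i) /\
  (forall (M : Ob C) (xi : filtration (classOf Theta) M),
      IsMinFiltLength Theta M (\sum_(i < t) mult xi i)%N) /\
  (forall i j : 'I_t, i != j -> ~ Iso (Q i) (Q j)).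
Proof.
have HP : forall Y, classOf Theta Y -> exists j : 'I_t, (fun _ => True) j /\ Y = Theta j.
  by move=> Y [i E]; exists i.
have Ha : forall (M : Ob C) (xi xi' : filtration (classOf Theta) M) (i : 'I_t),
    mult xi i = mult xi' i.
  move=> M xi xi' i.
  have [l [Hl _ _ Hm]] := rec2FL HC HS Hfin HP xi.
  have [l' [Hl' _ _ Hm']] := rec2FL HC HS Hfin HP xi'.
  rewrite /mult Hm Hm'.
  by apply: (main_count HC HS Hfin (leqnn (size (enum 'I_t))) Hl Hl') => j _;
    rewrite mem_enum.
have Hsum : forall (M : Ob C) (xi : filtration (classOf Theta) M),
    (\sum_(i < t) mult xi i)%N = flen xi.
  move=> M xi; have [l [Hl _ Hsz Hm]] := rec2FL HC HS Hfin HP xi.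
  rewrite /mult; under eq_bigr => i _ do rewrite Hm.
  by rewrite (sum_count HC HS Hfin) Hsz.
split => //; split.
- move=> M xi; split.
  + by exists xi; rewrite Hsum.
  + move=> xi'; rewrite (eq_bigr _ (fun i _ => Ha M xi xi' i)) Hsum //.
- move=> i j Hij; have := @Q_noniso R C HC t le Theta Q HS Hfin i j Hij. exact.
Qed.
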